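(* Let $p$ be a prime and let $G$ be a finite irreducible subgroup of $\mathrm{M}(p,\mathbb{C})$. Then $\mathrm{D}(p,\mathbb{C})\cap G$ is a maximal abelian normal subgroup of $G$.
   Context: $\mathrm{M}(p,\mathbb{C})$ is the group of monomial matrices in $\mathrm{GL}(p,\mathbb{C})$ and $\mathrm{D}(p,\mathbb{C})$ is the group of invertible diagonal matrices. *)

(* Defs.v *)
From HB Require Import structures.
From mathcomp Require Import all_boot all_order all_algebra all_fingroup.
From mathcomp Require Import mxrepresentation.
From mathcomp Require Import reals.
From mathcomp Require Import complex.
Set Implicit Arguments. Unset Strict Implicit. Unset Printing Implicit Defensive.
Import GRing.Theory Num.Theory.
Local Open Scope ring_scope.

(* A monomial matrix: exactly one nonzero entry in each row and in each column
   (such a matrix is automatically invertible). *)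
Definition is_monomial_mx (F : fieldType) (n : nat) (A : 'M[F]_n) : bool :=
  [forall i, #|[pred j | A i j != 0]| == 1%N] &&
  [forall j, #|[pred i | A i j != 0]| == 1%N].

(* Elements of G whose image is a diagonal matrix, i.e. (the preimage of)
   D(n, F) \cap rG(G). *)
Definition diag_part (F : fieldType) (gT : finGroupType) (G : {group gT}) (n : nat)
  (rG : mx_representation F G n) : {set gT} :=
  [set g in G | is_diag_mx (rG g)].

(* Main.v *)
Require Import Defs.
From HB Require Import structures.
From mathcomp Require Import all_boot all_order all_algebra all_fingroup.
From mathcomp Require Import mxrepresentation.
From mathcomp Require Import reals.
From mathcomp Require Import complex.
Set Implicit Arguments. Unset Strict Implicit. Unset Printing Implicit Defensive.

Lemma block (n : nat) (r : rel 'I_n) : prime n ->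
  (forall x, r x x) -> (forall x y, r x y -> r y x) ->
  (forall x y z, r x y -> r y z -> r x z) ->
  (forall i j, exists f : 'I_n -> 'I_n,
      [/\ injective f, f i = j & forall x y, r x y -> r (f x) (f y)]) ->
  (forall i j, r i j -> i = j) \/ (forall i j, r i j).
Proof.
move=> pn rr rs rt tr.
pose cl i := [set j | r i j].
have cle i j : #|cl i| <= #|cl j|.
  have [f [fi fij fr]] := tr i j.
  rewrite -(card_imset _ fi); apply: subset_leq_card.
  by apply/subsetP => y /imsetP[x]; rewrite !inE -fij => rx ->; apply: fr.
have ceq i j : #|cl i| = #|cl j| by apply/eqP; rewrite eqn_leq !cle.
have eqR : {in [set: 'I_n] & &, equivalence_rel r}.
  move=> x y z _ _ _; split => // rxy; apply/idP/idP => H.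
    exact: rt (rs _ _ rxy) H.
  exact: rt rxy H.
have n0 : 0 < n by apply: prime_gt0.
pose i0 : 'I_n := Ordinal n0.
have Hn : n = #|equivalence_partition r [set: 'I_n]| * #|cl i0|.
  rewrite -{1}(card_ord n) -cardsT.
  apply: card_uniform_partition (equivalence_partitionP eqR).
  move=> A /imsetP[x _ ->]; rewrite -(ceq x i0); apply: eq_card => y; by rewrite !inE.
have : #|cl i0| %| n by apply/dvdnP; eexists; exact: Hn.
move=> hd; case/primeP: pn => _ /(_ _ hd) /orP[] /eqP Hc.
  left=> i j rij.
  have : #|cl i| <= 1 by rewrite (ceq i i0) Hc.
  move/card_le1P => /(_ i); rewrite !inE rr => /(_ isT) /(_ j).
  by rewrite inE rij => /esym /eqP.
right=> i j.
have : cl i = setT.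
  by apply/eqP; rewrite eqEcard subsetT /= cardsT card_ord (ceq i i0) Hc.
by move/setP => /(_ j); rewrite !inE.
Qed.

Import GRing.Theory Num.Theory.
Local Open Scope ring_scope.


Section Mono.
Variables (F : fieldType) (gT : finGroupType) (G : {group gT}) (p : nat).
Variable rG : mx_representation F G p.
Hypothesis mono : forall g, g \in G -> is_monomial_mx (rG g).

Definition sfun (A : 'M[F]_p) (i : 'I_p) : 'I_p := odflt i [pick j | A i j != 0].

Lemma monoP A : is_monomial_mx A -> forall i j, (A i j != 0%R) = (j == sfun A i).
Proof.
case/andP=> /forallP Hr _ i j; have /card1P[j0 Hj0] := Hr i.
rewrite /sfun; case: pickP => [j1 Hj1 | H]; last by have := Hj0 j0; rewrite !inE /= (H j0) eqxx.
have := Hj0 j1; rewrite inE Hj1 => /esym /eqP ->.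
by have := Hj0 j; rewrite inE.
Qed.

Lemma sfun_nz A : is_monomial_mx A -> forall i, A i (sfun A i) != 0%R.
Proof. by move=> mA i; rewrite monoP. Qed.

Lemma sfun_inj A : is_monomial_mx A -> injective (sfun A).
Proof.
move=> mA i i' E; have := mA; case/andP=> _ /forallP Hc.
have /card1P[i0 Hi0] := Hc (sfun A i).
have h1 := Hi0 i; have h2 := Hi0 i'; rewrite !inE in h1 h2.
rewrite sfun_nz // in h1; rewrite E sfun_nz // in h2.
by rewrite (eqP (esym h1)) (eqP (esym h2)).
Qed.

Lemma mul_mono A (B : 'M[F]_p) i j : is_monomial_mx A ->
  (A *m B) i j = A i (sfun A i) * B (sfun A i) j.
Proof.
move=> mA; rewrite mxE (bigD1 (sfun A i)) //= big1 ?addr0 // => k nk.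
have : (A i k != 0%R) = false by rewrite monoP // (negbTE nk).
by move/negbFE/eqP->; rewrite mul0r.
Qed.

Definition pi (g : gT) : {perm 'I_p} :=
  odflt 1%g [pick s : {perm 'I_p} | [forall i, s i == sfun (rG g) i]].

Lemma piE g : g \in G -> forall i, pi g i = sfun (rG g) i.
Proof.
move=> Gg; rewrite /pi; case: pickP => [s /forallP H | H] i; first exact/eqP.
have := H (perm (sfun_inj (mono Gg))).
by move/negbT/forallPn=> [k]; rewrite permE eqxx.
Qed.

Lemma pi_nz g i : g \in G -> rG g i (pi g i) != 0%R.
Proof. by move=> Gg; rewrite piE // sfun_nz // mono. Qed.

Lemma pi_zero g i j : g \in G -> j != pi g i -> rG g i j = 0%R.
Proof. by move=> Gg nj; apply/eqP; rewrite -[_ == 0%R]negbK monoP ?mono // -piE // (negbTE nj). Qed.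

Lemma mulpi g (h : 'M[F]_p) i j : g \in G -> (rG g *m h) i j = rG g i (pi g i) * h (pi g i) j.
Proof. by move=> Gg; rewrite piE // mul_mono // mono. Qed.

Lemma piM : {in G &, {morph pi : x y / (x * y)%g}}.
Proof.
move=> x y Gx Gy; apply/permP => i; rewrite permM.
apply/eqP; rewrite piE ?groupM // eq_sym -monoP ?mono ?groupM // repr_mxM //.
by rewrite mulpi // mulf_neq0 // pi_nz.
Qed.

Canonical piMorph := Morphism piM.

Lemma diagE g : g \in G -> is_diag_mx (rG g) = (pi g == 1%g).
Proof.
move=> Gg; apply/is_diag_mxP/eqP => [H | H i j ne].
  apply/permP => i; rewrite perm1; apply/eqP; apply: contraT => ne.
  by move: (pi_nz i Gg); rewrite H ?eqxx // eq_sym.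
by apply: pi_zero; rewrite // H perm1 eq_sym.
Qed.

Lemma diag_ker : diag_part rG = ('ker piMorph)%g.
Proof.
apply/setP => g; rewrite !inE; case Gg: (g \in G) => //=.
by rewrite diagE // inE.
Qed.


Local Notation D := (diag_part rG).

Lemma memD g : (g \in D) = (g \in G) && (pi g == 1%g).
Proof.
rewrite /diag_part inE; case Gg: (g \in G) => //=; exact: diagE.
Qed.

Lemma DsubG : D \subset G.
Proof. by apply/subsetP => g; rewrite memD => /andP[]. Qed.

Lemma piV g : g \in G -> pi (g^-1)%g = (pi g)^-1%g.
Proof. exact: (morphV piMorph). Qed.

Lemma diag_normal : (D <| G)%g.
Proof. rewrite diag_ker; exact: ker_normal. Qed.

Lemma diag_abelian : mx_faithful rG -> abelian D.
Proof.
move=> ff; apply/subsetP => x Dx; apply/centP => y Dy.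
have Gx := subsetP DsubG x Dx; have Gy := subsetP DsubG y Dy.
move: Dx Dy; rewrite !inE => /andP[_ dx] /andP[_ dy].
apply: (mx_faithful_inj ff); rewrite ?groupM // !repr_mxM //.
by case/diag_mxP: dx => d ->; case/diag_mxP: dy => e ->; exact: diag_mxC.
Qed.

Lemma pi_trans : mx_irreducible rG -> forall i j, exists2 g, g \in G & pi g i = j.
Proof.
move=> irr i j; pose O := [set pi g i | g in G].
have memO a g : g \in G -> (pi g a \in O) = (a \in O).
  move=> Gg; apply/imsetP/imsetP => [[h Gh E] | [h Gh ->]].
    exists (h * g^-1)%g; first by rewrite groupM ?groupV.
    by rewrite piM ?groupV // permM piV // -E permK.
  by exists (h * g)%g; rewrite ?groupM // piM // permM.
pose U : 'M[F]_p := diag_mx (\row_a ((a \in O)%:R)).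
have Ucomm g : g \in G -> U *m rG g = rG g *m U.
  move=> Gg; apply/matrixP => a b; rewrite mul_diag_mx mul_mx_diag !mxE.
  have [->|nb] := eqVneq b (pi g a); first by rewrite memO // mulrC.
  by rewrite pi_zero // mulr0 mul0r.
have modU : mxmodule rG U.
  by apply/mxmoduleP => g Gg; rewrite Ucomm // submxMl.
have iO : i \in O by apply/imsetP; exists 1%g; rewrite ?group1 // morph1 perm1.
have nzU : U != 0.
  apply/eqP => /matrixP /(_ i i); rewrite !mxE eqxx iO /= mulr1n => /eqP.
  by rewrite oner_eq0.
case/mx_irrP: irr => _ /(_ U modU nzU) /row_fullP[B /matrixP /(_ j j)].
rewrite mul_mx_diag !mxE eqxx; case jO: (j \in O).
  by move=> _; case/imsetP: jO => g Gg ->; exists g.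
by rewrite mulr0 => /eqP; rewrite eq_sym oner_eq0.
Qed.


Lemma conj_diag_entry g d x : g \in G -> d \in D ->
  rG (g * d * g^-1)%g x x = rG d (pi g x) (pi g x).
Proof.
move=> Gg Dd; have Gd := subsetP DsubG d Dd.
have pd : pi d = 1%g by move: Dd; rewrite memD => /andP[_ /eqP].
have Gi : (g^-1)%g \in G by rewrite groupV.
rewrite !repr_mxM ?groupM // -mulmxA mulpi // mulpi // pd perm1.
have : (rG g *m rG (g^-1)%g) x x = 1.
  by rewrite -repr_mxM // mulgV repr_mx1 mxE eqxx.
rewrite mulpi // => E.
by rewrite mulrCA E mulr1.
Qed.

Lemma conjD g d : g \in G -> d \in D -> (g * d * g^-1)%g \in D.
Proof.
move=> Gg Dd; have Gd := subsetP DsubG d Dd.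
have pd : pi d = 1%g by move: Dd; rewrite memD => /andP[_ /eqP].
rewrite memD !groupM ?groupV //= !piM ?groupM ?groupV // pd mulg1 piV //.
by rewrite mulgV.
Qed.

Section Max.
Hypothesis pp : prime p.
Hypothesis irr : mx_irreducible rG.
Variable K : {group gT}.
Hypothesis nK : (K <| G)%g.
Hypothesis abK : abelian K.
Hypothesis sDK : D \subset K.

Let sKG : K \subset G. Proof. by case/andP: nK. Qed.
Let nKG : G \subset 'N(K)%g. Proof. by case/andP: nK. Qed.
Let comK x y : x \in K -> y \in K -> commute x y.
Proof. by move=> Kx Ky; move/centP: (subsetP abK x Kx); apply. Qed.
Let KG x : x \in K -> x \in G. Proof. exact: subsetP sKG x. Qed.
Let KJ g k : g \in G -> k \in K -> (g * k * g^-1)%g \in K.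
Proof.
move=> Gg Kk; have := memJ_norm k (subsetP nKG _ (groupVr Gg)).
by rewrite /conjg invgK mulgA => ->.
Qed.

Let r (x y : 'I_p) := [forall d in D, rG d x x == rG d y y].

Lemma sep_case : (forall i j, r i j -> i = j) -> K \subset D.
Proof.
move=> sep; apply/subsetP => k Kk; have Gk := KG Kk.
rewrite memD Gk /=; apply/eqP/permP => i; rewrite perm1; apply: esym; apply: sep.
apply/forall_inP => d Dd; have Gd := subsetP DsubG d Dd.
have pd : pi d = 1%g by move: Dd; rewrite memD => /andP[_ /eqP].
have := congr1 (fun M : 'M[F]_p => M i (pi k i)) (congr1 rG (comK (subsetP sDK d Dd) Kk)).
rewrite /= !repr_mxM // !mulpi // pd perm1 [RHS]mulrC => /(mulIf (pi_nz i Gk)) ->.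
exact: eqxx.
Qed.


Let i0 : 'I_p := Ordinal (prime_gt0 pp).
Let i1 : 'I_p := Ordinal (prime_gt1 pp).
Let i01 : i0 != i1. Proof. by []. Qed.

Lemma r_block : (forall i j, r i j -> i = j) \/ (forall i j, r i j).
Proof.
apply: (@block p r pp).
- by move=> x; apply/forall_inP => d _.
- move=> x y /forall_inP H; apply/forall_inP => d Dd; rewrite eq_sym; exact: H.
- move=> x y z /forall_inP H1 /forall_inP H2; apply/forall_inP => d Dd.
  by rewrite (eqP (H1 d Dd)) H2.
- move=> i j; have [g Gg <-] := pi_trans irr i j; exists (pi g); split => //.
    exact: perm_inj.
  move=> x y /forall_inP H; apply/forall_inP => d Dd.
  by rewrite -!conj_diag_entry //; apply: H; apply: conjD.
Qed.

Lemma D_scalar : (forall i j, r i j) -> forall d, d \in D -> rG d = (rG d i0 i0)%:M.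
Proof.
move=> allr d Dd; have Gd := subsetP DsubG d Dd.
have pd : pi d = 1%g by move: Dd; rewrite memD => /andP[_ /eqP].
apply/matrixP => a b; rewrite mxE.
have [<-|nab] := eqVneq a b.
  by rewrite mulr1n; move/forall_inP: (allr a i0) => /(_ d Dd) /eqP.
by rewrite pi_zero // ?pd ?perm1 1?eq_sym // mulr0n.
Qed.

Lemma orbit_dich (H : {group gT}) : H \subset G ->
  (forall i j, exists f : 'I_p -> 'I_p, [/\ injective f, f i = j &
      forall h x, h \in H -> exists2 h', h' \in H & pi h' (f x) = f (pi h x)]) ->
  (forall h, h \in H -> pi h = 1%g) \/ (forall i j, exists2 h, h \in H & pi h i = j).
Proof.
move=> sHG tr; pose rH x y := [exists h in H, pi h x == y].
have HG h : h \in H -> h \in G by apply: (subsetP sHG).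
have := @block p rH pp.
case.
- by move=> x; apply/exists_inP; exists 1%g; rewrite ?group1 // morph1 perm1.
- move=> x y /exists_inP[h Hh /eqP <-]; apply/exists_inP; exists (h^-1)%g.
    by rewrite groupV.
  by rewrite piV ?HG // permK.
- move=> x y z /exists_inP[h1 H1 /eqP <-] /exists_inP[h2 H2 /eqP <-].
  apply/exists_inP; exists (h1 * h2)%g; first by rewrite groupM.
  by rewrite piM ?HG // permM.
- move=> i j; have [f [fi fij fP]] := tr i j; exists f; split => //.
  move=> x y /exists_inP[h Hh /eqP <-]; have [h' Hh' E] := fP h x Hh.
  by apply/exists_inP; exists h'; rewrite // E.
- move=> id; left => h Hh; apply/permP => x; rewrite perm1; apply: esym; apply: id.
  by apply/exists_inP; exists h.
- by move=> all; right => i j; have /exists_inP[h Hh /eqP <-] := all i j; exists h.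
Qed.


Hypothesis absirr : mx_absolutely_irreducible rG.

Lemma piX x n : x \in G -> pi (x ^+ n)%g = (pi x ^+ n)%g.
Proof.
move=> Gx; elim: n => [|n IH]; first by rewrite !expg0 morph1.
by rewrite !expgS piM ?groupX // IH.
Qed.

Lemma burnside_contra : (forall d, d \in D -> rG d = (rG d i0 i0)%:M) ->
  (forall g, g \in G -> pi g i0 = i0 -> pi g i1 = i1 -> pi g = 1%g) -> False.
Proof.
move=> Dsc key.
pose Tp := [set x : 'I_p * 'I_p | x.1 != x.2].
pose W := \matrix_(j < #|Tp|) (if [pick g in G | (pi g i0 == (enum_val j).1)
              && (pi g i1 == (enum_val j).2)] is Some g then mxvec (rG g) else 0).
have sEW : (enveloping_algebra_mx rG <= W)%MS.
  apply/row_subP => j; rewrite rowK; set x := enum_val j.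
  have Gx : x \in G := enum_valP j.
  have Tt : (pi x i0, pi x i1) \in Tp by rewrite inE /= (inj_eq perm_inj).
  have := row_sub (enum_rank_in Tt (pi x i0, pi x i1)) W.
  rewrite rowK enum_rankK_in //=.
  case: pickP => [y /andP[Gy /andP[/eqP e0 /eqP e1]] | none]; last first.
    by have := none x; rewrite Gx !eqxx.
  move=> sub; have Dxy : (x * y^-1)%g \in D.
    rewrite memD groupM ?groupV //=; apply/eqP; apply: key; rewrite ?groupM ?groupV //.
      by rewrite piM ?groupV // permM piV // -e0 permK.
    by rewrite piM ?groupV // permM piV // -e1 permK.
  have -> : rG x = rG (x * y^-1)%g *m rG y.
    rewrite -repr_mxM ?groupV ?groupM //; last by rewrite groupV.
    by rewrite -mulgA mulVg mulg1.
  rewrite Dsc // mul_scalar_mx linearZ /=; exact: scalemx_sub.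
have rk : (p * p <= #|Tp|)%N.
  case/andP: absirr => _ /eqP rkE; rewrite -rkE.
  exact: leq_trans (mxrankS sEW) (rank_leq_row W).
have : (#|Tp| < p * p)%N.
  have -> : (p * p = #|[set: 'I_p * 'I_p]|)%N by rewrite cardsT card_prod card_ord.
  apply: proper_card; rewrite properT.
  by apply/eqP => /setP /(_ (i0, i0)); rewrite !inE eqxx.
by rewrite ltnNge rk.
Qed.

Lemma scalar_case : (forall i j, r i j) -> K \subset D.
Proof.
move=> allr; have Dsc := D_scalar allr.
apply/subsetP => k0 Kk0; apply: contraT => nDk0; suff : False by [].
have Gk0 := KG Kk0.
have Ktr : forall i j, exists2 h, h \in K & pi h i = j.
  case: (orbit_dich sKG).
  - move=> i j; have [g Gg <-] := pi_trans irr i j; exists (pi g); split => //.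
      exact: perm_inj.
    move=> h x Kh; exists (g^-1 * h * g)%g.
      by have := KJ (groupVr Gg) Kh; rewrite invgK.
    by rewrite !piM ?groupM ?groupV ?(KG Kh) // !permM piV // permK.
  - by move=> H1; move: nDk0; rewrite memD Gk0 (H1 _ Kk0) eqxx.
  - done.
have reg : forall h i, h \in K -> pi h i = i -> pi h = 1%g.
  move=> h i Kh fx; apply/permP => j; rewrite perm1; have [h' Kh' <-] := Ktr i j.
  by rewrite -permM -piM ?KG // (comK Kh' Kh) piM ?KG // permM fx.
have [k1 Kk1 e1] := Ktr i0 i1.
have sCK : <[k1]>%g \subset K by rewrite cycle_subG.
have Ctr : forall j, exists2 c, c \in <[k1]>%g & pi c i0 = j.
  case: (orbit_dich (subset_trans sCK sKG)).
  - move=> i j; have [h Kh <-] := Ktr i j; exists (pi h); split => //.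
      exact: perm_inj.
    move=> c x Cc; exists c => //; have Kc := subsetP sCK c Cc.
    by rewrite -!permM -!piM ?KG // (comK Kh Kc).
  - move=> H1; have := H1 k1 (cycle_id k1); move/permP/(_ i0); rewrite e1 perm1.
    by move/eqP; rewrite eq_sym (negbTE i01).
  - by move=> H j; exact: H.
apply: burnside_contra Dsc _ => g Gg f0 f1.
pose k' := (g^-1 * k1 * g)%g.
have Kk' : k' \in K by have := KJ (groupVr Gg) Kk1; rewrite invgK.
have Gk1 := KG Kk1; have Gk' := KG Kk'.
have pk' : pi k' i0 = i1.
  by rewrite !piM ?groupM ?groupV // !permM piV // -{1}f0 permK e1 f1.
have ek : pi k' = pi k1.
  have Kh : (k' * k1^-1)%g \in K by rewrite groupM ?groupV.
  have H := reg _ i0 Kh.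
  have : pi (k' * k1^-1 * k1)%g = pi k1.
    rewrite piM ?groupM ?groupV // H ?mul1g //.
    by rewrite piM ?groupV // permM pk' piV // -e1 permK.
  by rewrite -mulgA mulVg mulg1.
have cg : commute (pi g) (pi k1).
  move: ek; rewrite /k' !piM ?groupM ?groupV // piV // => E.
  by rewrite /commute -{1}E !mulgA mulgV mul1g.
apply/permP => j; rewrite perm1; have [c Cc <-] := Ctr j.
have [n ->] := cycleP _ _ Cc.
by rewrite piX // -permM -(commuteX n cg) permM f0.
Qed.

Lemma max_diag : K \subset D.
Proof. by case: r_block; [apply: sep_case | apply: scalar_case]. Qed.

End Max.
End Mono.

Local Open Scope group_scope.

Theorem corollary2p13 (R : realType) (p : nat) (gT : finGroupType) (G : {group gT})
    (rG : mx_representation R[i] G p) :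
  prime p ->
  mx_faithful rG ->
  (forall g, g \in G -> is_monomial_mx (rG g)) ->
  mx_irreducible rG ->
  [/\ diag_part rG <| G, abelian (diag_part rG)
    & forall K : {group gT}, K <| G -> abelian K ->
        diag_part rG \subset K -> K = diag_part rG :> {set gT}].
Proof.
move=> pp ff mono irr.
have absirr : mx_absolutely_irreducible rG.
  exact: (@group_closure_closed_field R[i] gT G p rG irr).
split.
- exact: diag_normal mono.
- exact: diag_abelian mono ff.
- move=> K nK abK sDK; apply/eqP; rewrite eqEsubset sDK andbT.
  exact: (max_diag mono pp irr nK abK sDK absirr).
Qed.
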